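(* Let $\alpha\in(0,1]$, $\gamma\in(\tfrac12,1]$, $c>0$, and let $(r_n)_{n\ge0}$ satisfy $0\le r_n<1$ and $\lim_{n\to\infty}n^\gamma r_n=c$. Define $l_n=\prod_{k=0}^{n-1}\frac{1}{1-\alpha r_k}$ and $k_n(t)=\lfloor n+n^\gamma t\rfloor$ for $t\ge0$. Then, uniformly over compact subsets of $[0,+\infty)$, \[\lim_{n\to\infty}\frac{l_{k_n(t)}}{l_n}=\begin{cases}e^{c\alpha t}&\text{if }\tfrac12<\gamma<1,\\(1+t)^{c\alpha}&\text{if }\gamma=1\text{ and }2c\alpha>1.\end{cases}\] *)

(* Defs.v *)
From Stdlib Require Import Reals Lra ZArith.
Open Scope R_scope.

Fixpoint lprod (alpha : R) (r : nat -> R) (n : nat) : R :=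
  match n with
  | O => 1
  | S m => lprod alpha r m * / (1 - alpha * r m)
  end.

(* k_n(t) = floor(n + n^gamma t)  (Int_part is the floor; argument >= 0 for t >= 0) *)
Definition kidx (gamma : R) (n : nat) (t : R) : nat :=
  Z.to_nat (Int_part (INR n + Rpower (INR n) gamma * t)).

Definition unif_cv_on (F : nat -> R -> R) (f : R -> R) (K : R -> Prop) : Prop :=
  forall eps : R, 0 < eps ->
    exists N : nat, forall n : nat, (N <= n)%nat ->
      forall t : R, K t -> Rabs (F n t - f t) < eps.

(* Main.v *)
Require Import Defs.
From Stdlib Require Import Reals Lra Lia ZArith.
Open Scope R_scope.


Lemma exp_le' x y : x <= y -> exp x <= exp y.
Proof. intros [H|H]. left; now apply exp_increasing. subst; lra. Qed.

Lemma ln_le' x y : 0 < x -> x <= y -> ln x <= ln y.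
Proof. intros Hx [H|H]. left; now apply ln_increasing. subst; lra. Qed.

Lemma ln_le_xm1 x : 0 < x -> ln x <= x - 1.
Proof. intros Hx. pose proof (exp_ineq1_le (ln x)). rewrite exp_ln in H; lra. Qed.

Lemma ln_diff_le a b : 0 < a -> 0 < b -> ln a - ln b <= a / b - 1.
Proof.
  intros Ha Hb. replace a with (b * (a / b)) at 1 by (field; lra).
  rewrite ln_mult; [| lra | apply Rdiv_lt_0_compat; lra].
  pose proof (ln_le_xm1 (a/b) ltac:(apply Rdiv_lt_0_compat; lra)). lra.
Qed.

Lemma ln_ge0 x : 1 <= x -> 0 <= ln x.
Proof. intros H. rewrite <- ln_1. apply ln_le'; lra. Qed.

Lemma Rpower_gt0 x y : 0 < Rpower x y.
Proof. unfold Rpower. apply exp_pos. Qed.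

Lemma Rpower_inv_mul x y : Rpower x (- y) * Rpower x y = 1.
Proof. unfold Rpower. rewrite <- exp_plus. replace (- y * ln x + y * ln x) with 0 by ring. apply exp_0. Qed.

Lemma Rpower_base_dec a b y : 0 < a -> a <= b -> y <= 0 -> Rpower b y <= Rpower a y.
Proof.
  intros Ha Hab Hy. unfold Rpower. apply exp_le'.
  pose proof (ln_le' a b Ha Hab). nra.
Qed.

Lemma expdiff d : Rabs d <= 1 -> Rabs (exp d - 1) <= 3 * Rabs d.
Proof.
  intros Hd. pose proof (exp_ineq1_le d) as H1. pose proof (exp_ineq1_le (-d)) as H2.
  rewrite exp_Ropp in H2. pose proof (exp_pos d) as Hp.
  assert (H3 : exp d - 1 <= d * exp d).
  { apply Rmult_le_compat_l with (r := exp d) in H2; [|lra].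
    rewrite Rinv_r in H2; lra. }
  destruct (Rle_lt_dec 0 d) as [Hd0|Hd0].
  - rewrite (Rabs_pos_eq d Hd0) in *. rewrite Rabs_pos_eq by lra.
    assert (exp d <= 3). { apply Rle_trans with (exp 1). apply exp_le'; lra. apply exp_le_3. }
    nra.
  - rewrite (Rabs_left d Hd0) in *. assert (exp d < 1) by (rewrite <- exp_0; now apply exp_increasing).
    rewrite Rabs_left1 by nra. nra.
Qed.

Fixpoint ssum (f : nat -> R) (n m : nat) : R :=
  match m with O => 0 | S m' => ssum f n m' + f (n + m')%nat end.

Lemma ssum_bounds f n m lo hi :
  (forall i, (i < m)%nat -> lo <= f (n + i)%nat <= hi) ->
  INR m * lo <= ssum f n m <= INR m * hi.
Proof.
  induction m as [|m IH]; intros H; simpl ssum.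
  - simpl; lra.
  - rewrite S_INR. assert (IH' := IH (fun i Hi => H i ltac:(lia))).
    assert (Hm := H m ltac:(lia)). lra.
Qed.

Lemma ssum_approx f g n m C e :
  (forall i, (i < m)%nat -> Rabs (f (n + i)%nat - C * g (n + i)%nat) <= e * g (n + i)%nat) ->
  Rabs (ssum f n m - C * ssum g n m) <= e * ssum g n m.
Proof.
  induction m as [|m IH]; intros H; simpl ssum.
  - rewrite Rmult_0_r, Rminus_0_r, Rabs_R0; lra.
  - assert (IH' := IH (fun i Hi => H i ltac:(lia))).
    assert (Hm := H m ltac:(lia)).
    replace (ssum f n m + f (n + m)%nat - C * (ssum g n m + g (n + m)%nat))
      with ((ssum f n m - C * ssum g n m) + (f (n + m)%nat - C * g (n + m)%nat)) by ring.
    eapply Rle_trans. apply Rabs_triang. lra.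
Qed.

Lemma ssum_tele_lo f G n m :
  (forall i, (i < m)%nat -> G (S (n + i)) - G (n + i)%nat <= f (n + i)%nat) ->
  G (n + m)%nat - G n <= ssum f n m.
Proof.
  induction m as [|m IH]; intros H; simpl ssum.
  - rewrite Nat.add_0_r; lra.
  - assert (IH' := IH (fun i Hi => H i ltac:(lia))).
    assert (Hm := H m ltac:(lia)). rewrite Nat.add_succ_r. lra.
Qed.

Lemma ssum_tele_hi f G n m :
  (forall i, (i < m)%nat -> f (n + i)%nat <= G (S (n + i)) - G (n + i)%nat) ->
  ssum f n m <= G (n + m)%nat - G n.
Proof.
  induction m as [|m IH]; intros H; simpl ssum.
  - rewrite Nat.add_0_r; lra.
  - assert (IH' := IH (fun i Hi => H i ltac:(lia))).
    assert (Hm := H m ltac:(lia)). rewrite Nat.add_succ_r. lra.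
Qed.

Definition aseq alpha (r : nat -> R) j := - ln (1 - alpha * r j).

Lemma lprod_shift alpha r n m :
  (forall j, 0 < 1 - alpha * r j) ->
  lprod alpha r (n + m) = lprod alpha r n * exp (ssum (aseq alpha r) n m).
Proof.
  intros Hp. induction m as [|m IH]; simpl ssum.
  - rewrite Nat.add_0_r, exp_0; ring.
  - rewrite Nat.add_succ_r. simpl lprod. rewrite IH, exp_plus. unfold aseq.
    rewrite exp_Ropp, exp_ln by apply Hp. ring.
Qed.

Lemma lprod_pos alpha r n : (forall j, 0 < 1 - alpha * r j) -> 0 < lprod alpha r n.
Proof.
  intros Hp. induction n; simpl. lra. apply Rmult_lt_0_compat; auto. apply Rinv_0_lt_compat, Hp.
Qed.

Lemma unif_ext F G f g K :
  (forall n t, K t -> F n t = G n t) -> (forall t, K t -> f t = g t) ->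
  unif_cv_on G g K -> unif_cv_on F f K.
Proof.
  intros H1 H2 H eps He. destruct (H eps He) as [N HN]. exists N. intros n Hn t Ht.
  rewrite H1, H2 by auto. now apply HN.
Qed.

Lemma kidx_facts gamma n t : 0 <= Rpower (INR n) gamma * t ->
  (n <= kidx gamma n t)%nat /\
  INR (kidx gamma n t) <= INR n + Rpower (INR n) gamma * t /\
  INR n + Rpower (INR n) gamma * t - 1 < INR (kidx gamma n t).
Proof.
  intros Hs. unfold kidx. set (x := INR n + Rpower (INR n) gamma * t).
  destruct (base_Int_part x) as [A B].
  assert (Hn := pos_INR n).
  assert (Hz : (0 <= Int_part x)%Z).
  { assert (IZR (Int_part x) > -1) by (unfold x in *; lra).
    assert (-1 < Int_part x)%Z by (apply lt_IZR; lra). lia. }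
  assert (E : INR (Z.to_nat (Int_part x)) = IZR (Int_part x)).
  { rewrite INR_IZR_INZ, Z2Nat.id; auto. }
  rewrite E. split; [|split; lra].
  destruct (le_lt_dec n (Z.to_nat (Int_part x))) as [h|h]; auto.
  exfalso. apply lt_INR in h. rewrite E in h.
  assert (IZR (Int_part x) + 1 <= INR n).
  { rewrite INR_IZR_INZ in *. rewrite <- plus_IZR. apply IZR_le.
    apply lt_IZR in h. lia. }
  unfold x in *; lra.
Qed.

Lemma Rpower_small beta eta : 0 < beta -> 0 < eta ->
  exists N, (1 <= N)%nat /\ forall j, (N <= j)%nat -> Rpower (INR j) (- beta) <= eta.
Proof.
  intros Hb He. destruct (INR_archimed 1 (exp (- ln eta / beta)) ltac:(lra)) as [n Hn].
  exists (S n). split; [lia|]. intros j Hj.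
  assert (HN : exp (- ln eta / beta) <= INR j).
  { apply le_INR in Hj. rewrite S_INR in Hj. lra. }
  assert (Hl : - ln eta / beta <= ln (INR j)).
  { rewrite <- (ln_exp (- ln eta / beta)). apply ln_le'; auto. apply exp_pos. }
  unfold Rpower. rewrite <- (exp_ln eta He). apply exp_le'.
  apply Rmult_le_compat_l with (r := beta) in Hl; [|lra].
  replace (beta * (- ln eta / beta)) with (- ln eta) in Hl by (field; lra). lra.
Qed.

Lemma generic (a w : nat -> R) (C : R) (k : nat -> R -> nat) (h : R -> R) (K : R -> Prop) (H : R) :
  (forall t, K t -> Rabs (h t) <= H) ->
  (forall eps, 0 < eps -> exists N, forall j, (N <= j)%nat -> 0 <= w j /\ Rabs (a j - C * w j) <= eps * w j) ->
  (forall n t, K t -> (n <= k n t)%nat) ->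
  unif_cv_on (fun n t => ssum w n (k n t - n)) h K ->
  unif_cv_on (fun n t => exp (ssum a n (k n t - n))) (fun t => exp (C * h t)) K.
Proof.
  intros Hh HE Hk HW eps Heps.
  set (B := exp (Rabs C * Rabs H)).
  assert (HB : 0 < B) by apply exp_pos.
  set (D := Rmin 1 (eps / (3 * B)) / 2).
  assert (HD0 : 0 < D).
  { assert (0 < eps / (3 * B)) by (apply Rdiv_lt_0_compat; lra).
    unfold D, Rmin; destruct Rle_dec; lra. }
  assert (HD1 : D <= 1/2) by (unfold D; pose proof (Rmin_l 1 (eps / (3*B))); lra).
  assert (HD2 : 3 * B * D < eps).
  { unfold D. pose proof (Rmin_r 1 (eps / (3*B))).
    assert (0 < eps / (3*B)) by (apply Rdiv_lt_0_compat; lra).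
    assert (3 * B * (eps / (3*B)) = eps) by (field; lra).
    assert (Rmin 1 (eps / (3 * B)) > 0) by (unfold Rmin; destruct Rle_dec; lra).
    nra. }
  assert (HH : 0 <= Rabs H) by apply Rabs_pos.
  set (e1 := D / (2 * (Rabs H + 1))).
  assert (He1 : 0 < e1) by (unfold e1; apply Rdiv_lt_0_compat; lra).
  set (e2 := Rmin 1 (D / (2 * (Rabs C + 1)))).
  assert (HC : 0 <= Rabs C) by apply Rabs_pos.
  assert (He2 : 0 < e2).
  { unfold e2. assert (0 < D / (2 * (Rabs C + 1))) by (apply Rdiv_lt_0_compat; lra).
    unfold Rmin; destruct Rle_dec; lra. }
  destruct (HE e1 He1) as [N1 HN1].
  destruct (HW e2 He2) as [N2 HN2].
  exists (Nat.max N1 N2). intros n Hn t Ht.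
  specialize (HN2 n ltac:(lia) t Ht). simpl in HN2.
  set (m := (k n t - n)%nat) in *.
  set (Sw := ssum w n m) in *. set (Sa := ssum a n m).
  assert (Hap : Rabs (Sa - C * Sw) <= e1 * Sw).
  { apply ssum_approx. intros i _. apply HN1. lia. }
  assert (Hwpos : 0 <= Sw).
  { pose proof (ssum_bounds w n m 0 (w (n+0)%nat)) as _.
    assert (0 <= Sw) as X; [|exact X]. unfold Sw. clear -HN1 Hn.
    induction m; simpl. lra. assert (0 <= w (n+m)%nat) by (apply HN1; lia). lra. }
  assert (Hht := Hh t Ht).
  assert (Hh2 : Rabs H <= Rabs H) by lra.
  assert (He2a : e2 <= 1) by apply Rmin_l.
  assert (He2b : e2 <= D / (2 * (Rabs C + 1))) by apply Rmin_r.
  assert (HSw : Sw <= Rabs H + 1).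
  { apply Rabs_def2 in HN2. destruct HN2. assert (h t <= Rabs H) by (pose proof (Rle_abs (h t)); pose proof (Rle_abs H); lra). lra. }
  assert (Hd : Rabs (Sa - C * h t) <= D).
  { replace (Sa - C * h t) with ((Sa - C * Sw) + C * (Sw - h t)) by ring.
    eapply Rle_trans. apply Rabs_triang. rewrite Rabs_mult.
    assert (e1 * Sw <= D / 2).
    { apply Rle_trans with (e1 * (Rabs H + 1)).
      apply Rmult_le_compat_l; lra. right; unfold e1; field; lra. }
    assert (Rabs C * Rabs (Sw - h t) <= D / 2).
    { apply Rle_trans with (Rabs C * (D / (2 * (Rabs C + 1)))).
      apply Rmult_le_compat_l; lra.
      apply Rle_trans with ((Rabs C + 1) * (D / (2 * (Rabs C + 1)))).
      apply Rmult_le_compat_r. left; apply Rdiv_lt_0_compat; lra. lra. right; field; lra. }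
    lra. }
  replace (exp Sa - exp (C * h t)) with (exp (C * h t) * (exp (Sa - C * h t) - 1)).
  2:{ rewrite Rmult_minus_distr_l, <- exp_plus. replace (C * h t + (Sa - C * h t)) with Sa by ring. ring. }
  rewrite Rabs_mult, Rabs_pos_eq by (left; apply exp_pos).
  assert (Hx : exp (C * h t) <= B).
  { unfold B. apply exp_le'. apply Rle_trans with (Rabs (C * h t)). apply Rle_abs.
    rewrite Rabs_mult. apply Rmult_le_compat_l; auto. apply Rle_trans with (Rabs H); auto.
    eapply Rle_trans. apply Hht. apply Rle_abs. }
  assert (Hy := expdiff (Sa - C * h t) ltac:(lra)).
  assert (0 <= Rabs (exp (Sa - C * h t) - 1)) by apply Rabs_pos.
  apply Rle_lt_trans with (B * (3 * D)).
  apply Rmult_le_compat; try lra. left; apply exp_pos. lra.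
Qed.

Lemma a_bounds x : 0 <= x <= 1/2 -> x <= - ln (1 - x) <= x + 2 * x * x.
Proof.
  intros Hx. split.
  - pose proof (ln_le_xm1 (1 - x) ltac:(lra)). lra.
  - assert (Hi : ln (1 - x) + ln (/ (1 - x)) = 0).
    { rewrite <- ln_mult by (try apply Rinv_0_lt_compat; lra). rewrite Rinv_r by lra. apply ln_1. }
    pose proof (ln_le_xm1 (/ (1 - x)) ltac:(apply Rinv_0_lt_compat; lra)).
    assert (/ (1 - x) - 1 <= x + 2 * x * x).
    { replace (/ (1 - x) - 1) with (x / (1 - x)) by (field; lra).
      apply Rmult_le_reg_r with (1 - x). lra.
      unfold Rdiv. rewrite Rmult_assoc, Rinv_l, Rmult_1_r by lra. nra. }
    lra.
Qed.

Lemma estimate alpha gamma c r :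
  0 < alpha <= 1 -> 0 < gamma -> 0 < c -> (forall n, 0 <= r n < 1) ->
  Un_cv (fun n => Rpower (INR n) gamma * r n) c ->
  forall eps, 0 < eps -> exists N, forall j, (N <= j)%nat ->
    0 <= Rpower (INR j) (- gamma) /\
    Rabs (aseq alpha r j - alpha * c * Rpower (INR j) (- gamma)) <= eps * Rpower (INR j) (- gamma).
Proof.
  intros Ha Hg Hc Hr Hl eps He.
  destruct (Hl (Rmin (eps/2) 1) ltac:(unfold Rmin; destruct Rle_dec; lra)) as [N1 HN1].
  set (eta := Rmin (/ (2 * (c + 1))) (eps / (4 * (c+1) * (c+1)))).
  assert (Heta : 0 < eta).
  { assert (0 < / (2 * (c + 1))) by (apply Rinv_0_lt_compat; lra).
    assert (0 < eps / (4 * (c+1) * (c+1))) by (apply Rdiv_lt_0_compat; nra).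
    unfold eta, Rmin; destruct Rle_dec; lra. }
  destruct (Rpower_small gamma eta Hg Heta) as [N2 [_ HN2]].
  exists (Nat.max N1 N2). intros j Hj.
  set (w := Rpower (INR j) (- gamma)).
  set (u := Rpower (INR j) gamma * r j).
  assert (Hw : 0 < w) by apply Rpower_gt0.
  split; [lra|].
  assert (Hu : Rabs (u - c) <= Rmin (eps/2) 1) by (left; apply HN1; lia).
  assert (Hu1 : Rmin (eps/2) 1 <= eps/2) by apply Rmin_l.
  assert (Hu2 : Rmin (eps/2) 1 <= 1) by apply Rmin_r.
  assert (Hd1 : u - c <= eps / 2) by (pose proof (Rle_abs (u - c)); lra).
  assert (Hd2 : c - u <= eps / 2) by (pose proof (Rle_abs (u - c)); rewrite <- Rabs_Ropp in Hu; pose proof (Rle_abs (-(u - c))); lra).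
  assert (Hd3 : u <= c + 1) by (pose proof (Rle_abs (u - c)); lra).
  assert (Hwe : w <= eta) by (apply HN2; lia).
  assert (Hwe1 : w <= / (2 * (c + 1))) by (unfold eta in Hwe; pose proof (Rmin_l (/ (2 * (c + 1))) (eps / (4 * (c+1) * (c+1)))); lra).
  assert (Hwe2 : w <= eps / (4 * (c+1) * (c+1))) by (unfold eta in Hwe; pose proof (Rmin_r (/ (2 * (c + 1))) (eps / (4 * (c+1) * (c+1)))); lra).
  assert (Hrj : r j = u * w).
  { unfold u, w. rewrite Rmult_comm, <- Rmult_assoc, Rpower_inv_mul. ring. }
  assert (Hu0 : 0 <= u) by (unfold u; pose proof (Rpower_gt0 (INR j) gamma); pose proof (Hr j); nra).
  set (x := alpha * r j).
  assert (Hx0 : 0 <= x) by (unfold x; pose proof (Hr j); nra).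
  assert (Hx1 : x <= (c + 1) * w) by (unfold x; rewrite Hrj; assert (u * w <= (c+1) * w) by (apply Rmult_le_compat_r; lra); assert (alpha * (u * w) <= u * w) by (assert (0 <= u * w) by nra; nra); lra).
  assert (Hcw : (c + 1) * w <= 1/2).
  { apply Rmult_le_compat_l with (r := c + 1) in Hwe1; [|lra].
    assert ((c + 1) * / (2 * (c + 1)) = 1/2) by (field; lra). lra. }
  assert (Hx2 : 2 * x * x <= eps / 2 * w).
  { assert (2 * x * x <= 2 * ((c+1) * w) * ((c+1) * w)) by nra.
    assert (2 * ((c+1) * w) * ((c+1) * w) <= 2 * (c+1) * (c+1) * w * (eps / (4 * (c+1) * (c+1)))).
    { replace (2 * ((c+1) * w) * ((c+1) * w)) with (2 * (c+1) * (c+1) * w * w) by ring.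
      apply Rmult_le_compat_l; nra. }
    assert (2 * (c+1) * (c+1) * w * (eps / (4 * (c+1) * (c+1))) = eps / 2 * w) by (field; lra).
    lra. }
  assert (Hxd : Rabs (x - alpha * c * w) <= eps / 2 * w).
  { unfold x. rewrite Hrj. replace (alpha * (u * w) - alpha * c * w) with ((alpha * w) * (u - c)) by ring.
    rewrite Rabs_mult, Rabs_pos_eq by nra.
    assert (Rabs (u - c) <= eps / 2) by (unfold Rabs; destruct Rcase_abs; lra).
    assert (alpha * w <= w) by nra. assert (0 <= Rabs (u - c)) by apply Rabs_pos. nra. }
  destruct (a_bounds x ltac:(lra)) as [A1 A2].
  unfold aseq. fold x.
  replace (- ln (1 - x) - alpha * c * w) with ((- ln (1 - x) - x) + (x - alpha * c * w)) by ring.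
  eapply Rle_trans. apply Rabs_triang.
  rewrite (Rabs_pos_eq (- ln (1 - x) - x)) by lra. lra.
Qed.

Lemma q_bounds x g : 0 <= x -> 0 < g -> 1 - g * x <= Rpower (1 + x) (- g) <= 1.
Proof.
  intros Hx Hg. unfold Rpower.
  assert (L0 : 0 <= ln (1 + x)) by (apply ln_ge0; lra).
  assert (L1 : ln (1 + x) <= x) by (pose proof (ln_le_xm1 (1 + x) ltac:(lra)); lra).
  replace (- g * ln (1 + x)) with (- (g * ln (1 + x))) by ring.
  pose proof (exp_ineq1_le (- (g * ln (1 + x)))).
  assert (g * ln (1 + x) <= g * x) by (apply Rmult_le_compat_l; lra).
  assert (0 <= g * ln (1 + x)) by (apply Rmult_le_pos; lra).
  assert (exp (- (g * ln (1 + x))) <= 1) by (apply Rle_trans with (exp 0); [apply exp_le'; lra | rewrite exp_0; lra]).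
  lra.
Qed.

Lemma W_sub gamma T (K : R -> Prop) : 0 < gamma < 1 -> (forall t, K t -> 0 <= t <= T) ->
  unif_cv_on (fun n t => ssum (fun j => Rpower (INR j) (- gamma)) n (kidx gamma n t - n)) (fun t => t) K.
Proof.
  intros Hg HK eps He.
  set (T0 := Rabs T). assert (HT0 : 0 <= T0) by apply Rabs_pos.
  assert (HKT : forall t, K t -> 0 <= t <= T0).
  { intros t Ht. destruct (HK t Ht). split; auto. pose proof (Rle_abs T). unfold T0; lra. }
  set (eta1 := eps / (2 * (T0 * T0 + 1))).
  assert (Heta1 : 0 < eta1) by (unfold eta1; apply Rdiv_lt_0_compat; nra).
  destruct (Rpower_small (1 - gamma) eta1 ltac:(lra) Heta1) as [N1 [HN1a HN1]].
  destruct (Rpower_small gamma (eps / 4) ltac:(lra) ltac:(lra)) as [N2 [HN2a HN2]].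
  exists (Nat.max N1 N2). intros n Hn t Ht. simpl.
  destruct (HKT t Ht) as [Ht0 HtT].
  set (nR := INR n).
  assert (HnR : 0 < nR) by (unfold nR; apply lt_0_INR; lia).
  set (P := Rpower nR gamma). assert (HP : 0 < P) by apply Rpower_gt0.
  set (wn := Rpower nR (- gamma)). assert (Hwn : 0 < wn) by apply Rpower_gt0.
  assert (HwP : wn * P = 1) by apply Rpower_inv_mul.
  assert (Hwn4 : wn <= eps / 4) by (apply HN2; lia).
  set (z := Rpower nR (gamma - 1)). assert (Hz : 0 < z) by apply Rpower_gt0.
  assert (Hz1 : z <= eta1) by (unfold z; replace (gamma - 1) with (- (1 - gamma)) by ring; apply HN1; lia).
  assert (HnzP : nR * z = P).
  { unfold z, P. rewrite <- (Rpower_1 nR HnR) at 1. rewrite <- Rpower_plus. f_equal; ring. }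
  destruct (kidx_facts gamma n t ltac:(fold nR; fold P; nra)) as [Hk1 [Hk2 Hk3]].
  fold nR P in Hk2, Hk3.
  set (k := kidx gamma n t) in *. set (m := (k - n)%nat).
  assert (Hm : INR m = INR k - nR) by (unfold m, nR; apply minus_INR; auto).
  set (x := z * T0). assert (Hx : 0 <= x) by (unfold x; nra).
  set (q := Rpower (1 + x) (- gamma)).
  destruct (q_bounds x gamma Hx ltac:(lra)) as [Hq1 Hq2]. fold q in Hq1, Hq2.
  assert (Hq0 : 0 < q) by apply Rpower_gt0.
  assert (Hlo : Rpower (nR + P * T0) (- gamma) = wn * q).
  { replace (nR + P * T0) with (nR * (1 + x)) by (unfold x; rewrite <- HnzP; ring).
    unfold wn, q. rewrite Rpower_mult_distr; auto. lra. }
  assert (HB : INR m * (wn * q) <= ssum (fun j => Rpower (INR j) (- gamma)) n m <= INR m * wn).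
  { apply ssum_bounds. intros i Hi. simpl.
    assert (Hi1 : nR <= INR (n + i)) by (unfold nR; apply le_INR; lia).
    assert (Hi2 : INR (n + i) + 1 <= INR k).
    { replace (INR (n + i) + 1) with (INR (S (n + i))) by (rewrite S_INR; ring). apply le_INR. unfold m in Hi. lia. }
    split.
    - rewrite <- Hlo. apply Rpower_base_dec; try lra. assert (P * t <= P * T0) by (apply Rmult_le_compat_l; lra). lra.
    - apply Rpower_base_dec; lra. }
  set (W := ssum (fun j => Rpower (INR j) (- gamma)) n m) in *.
  destruct HB as [HB1 HB2].
  assert (Hm0 : 0 <= INR m) by apply pos_INR.
  assert (U1 : INR m * wn <= t).
  { assert (INR m <= P * t) by lra.
    apply Rle_trans with (P * t * wn). apply Rmult_le_compat_r; lra.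
    replace (P * t * wn) with ((wn * P) * t) by ring. rewrite HwP; lra. }
  assert (U2 : t - wn < INR m * wn).
  { assert (P * t - 1 < INR m) by lra.
    apply Rmult_lt_compat_r with (r := wn) in H; auto.
    replace ((P * t - 1) * wn) with ((wn * P) * t - wn) in H by ring. rewrite HwP in H. lra. }
  assert (L1 : (t - wn) * q <= INR m * (wn * q)).
  { rewrite <- Rmult_assoc. apply Rmult_le_compat_r; lra. }
  assert (L2 : t * (1 - q) <= T0 * x).
  { apply Rle_trans with (t * (gamma * x)). apply Rmult_le_compat_l; lra.
    apply Rle_trans with (t * x). apply Rmult_le_compat_l; auto. nra.
    apply Rmult_le_compat_r; lra. }
  assert (L3 : T0 * x <= T0 * T0 * eta1).
  { unfold x. replace (T0 * (z * T0)) with (T0 * T0 * z) by ring. apply Rmult_le_compat_l; nra. }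
  assert (L4 : T0 * T0 * eta1 < eps / 2).
  { unfold eta1. replace (T0 * T0 * (eps / (2 * (T0 * T0 + 1)))) with (eps / 2 * (T0 * T0 / (T0 * T0 + 1))) by (field; nra).
    assert (T0 * T0 / (T0 * T0 + 1) < 1).
    { apply Rmult_lt_reg_r with (T0 * T0 + 1). nra. unfold Rdiv. rewrite Rmult_assoc, Rinv_l by nra. lra. }
    nra. }
  assert (wn * q <= wn) by nra.
  apply Rabs_def1; lra.
Qed.

Lemma W_one gamma (K : R -> Prop) : gamma = 1 -> (forall t, K t -> 0 <= t) ->
  unif_cv_on (fun n t => ssum (fun j => Rpower (INR j) (- gamma)) n (kidx gamma n t - n)) (fun t => ln (1 + t)) K.
Proof.
  intros Hg HK eps He.
  destruct (INR_archimed eps 1 He) as [n0 Hn0].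
  exists (n0 + 2)%nat. intros n Hn t Ht. simpl. specialize (HK t Ht).
  set (nR := INR n).
  assert (HnR : INR n0 + 2 <= nR) by (unfold nR; replace 2 with (INR 2) by (simpl; ring); rewrite <- plus_INR; apply le_INR; lia).
  assert (Hn00 := pos_INR n0).
  assert (HP : Rpower nR gamma = nR) by (subst; apply Rpower_1; lra).
  destruct (kidx_facts gamma n t ltac:(fold nR; rewrite HP; nra)) as [Hk1 [Hk2 Hk3]].
  fold nR in Hk2, Hk3. rewrite HP in Hk2, Hk3.
  set (k := kidx gamma n t) in *. set (m := (k - n)%nat).
  assert (Hkm : (n + m)%nat = k) by (unfold m; lia).
  set (kR := INR k) in *.
  assert (HkR : nR <= kR) by (unfold nR, kR; apply le_INR; auto).
  assert (Hw : forall j, (2 <= j)%nat -> Rpower (INR j) (- gamma) = / INR j).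
  { intros j Hj. subst. rewrite Rpower_Ropp, Rpower_1; auto. apply lt_0_INR; lia. }
  assert (Hn2 : (2 <= n)%nat) by lia.
  assert (Lo : ln (INR (n + m)) - ln (INR n) <= ssum (fun j => Rpower (INR j) (- gamma)) n m).
  { apply ssum_tele_lo with (G := fun j => ln (INR j)). intros i _.
    rewrite Hw by lia. rewrite S_INR.
    assert (0 < INR (n + i)) by (apply lt_0_INR; lia).
    eapply Rle_trans. apply ln_diff_le; lra. right; field; lra. }
  assert (Hi : ssum (fun j => Rpower (INR j) (- gamma)) n m <= ln (INR (n + m) - 1) - ln (INR n - 1)).
  { apply ssum_tele_hi with (G := fun j => ln (INR j - 1)). intros i _.
    rewrite Hw by lia. rewrite S_INR.
    assert (2 <= INR (n + i)) by (replace 2 with (INR 2) by (simpl; ring); apply le_INR; lia).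
    pose proof (ln_diff_le (INR (n + i) - 1) (INR (n + i)) ltac:(lra) ltac:(lra)).
    replace ((INR (n + i) - 1) / INR (n + i) - 1) with (- / INR (n + i)) in H0 by (field; lra).
    replace (INR (n + i) + 1 - 1) with (INR (n + i)) by ring. lra. }
  rewrite Hkm in Lo, Hi. fold nR kR in Lo, Hi.
  set (W := ssum (fun j => Rpower (INR j) (- gamma)) n m) in *.
  assert (E1 : ln (1 + t) - W < eps).
  { assert (A : ln ((1 + t) * nR) - ln kR <= (1 + t) * nR / kR - 1) by (apply ln_diff_le; nra).
    rewrite ln_mult in A by lra.
    assert (B : (1 + t) * nR / kR - 1 < / kR).
    { replace ((1 + t) * nR / kR - 1) with (((1 + t) * nR - kR) / kR) by (field; lra).
      unfold Rdiv. rewrite <- (Rmult_1_l (/ kR)) at 2. apply Rmult_lt_compat_r. apply Rinv_0_lt_compat; lra. lra. }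
    assert (C : / kR <= / (INR n0 + 1)) by (apply Rinv_le_contravar; lra).
    assert (D : / (INR n0 + 1) < eps).
    { apply Rmult_lt_reg_r with (INR n0 + 1). lra. rewrite Rinv_l by lra. nra. }
    lra. }
  assert (E2 : W - ln (1 + t) < eps).
  { assert (A : ln (kR - 1) - ln ((nR - 1) * (1 + t)) <= (kR - 1) / ((nR - 1) * (1 + t)) - 1) by (apply ln_diff_le; nra).
    rewrite ln_mult in A by lra.
    assert (B : (kR - 1) / ((nR - 1) * (1 + t)) - 1 <= / (nR - 1)).
    { replace ((kR - 1) / ((nR - 1) * (1 + t)) - 1) with ((kR - 1 - (nR - 1) * (1 + t)) / ((nR - 1) * (1 + t))) by (field; lra).
      apply Rle_trans with (t / ((nR - 1) * (1 + t))).
      unfold Rdiv. apply Rmult_le_compat_r. left; apply Rinv_0_lt_compat; nra. lra.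
      replace (/ (nR - 1)) with ((1 + t) / ((nR - 1) * (1 + t))) by (field; lra).
      unfold Rdiv. apply Rmult_le_compat_r. left; apply Rinv_0_lt_compat; nra. lra. }
    assert (C : / (nR - 1) <= / (INR n0 + 1)) by (apply Rinv_le_contravar; lra).
    assert (D : / (INR n0 + 1) < eps).
    { apply Rmult_lt_reg_r with (INR n0 + 1). lra. rewrite Rinv_l by lra. nra. }
    lra. }
  apply Rabs_def1; lra.
Qed.

Theorem lemma6p1 (alpha gamma c : R) (r : nat -> R)
  (Halpha : 0 < alpha <= 1) (Hgamma : 1/2 < gamma <= 1) (Hc : 0 < c)
  (Hr : forall n : nat, 0 <= r n < 1)
  (Hlim : Un_cv (fun n : nat => Rpower (INR n) gamma * r n) c) :
  forall K : R -> Prop, (forall t, K t -> 0 <= t) -> compact K ->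
    (gamma < 1 ->
       unif_cv_on (fun n t => lprod alpha r (kidx gamma n t) / lprod alpha r n)
                  (fun t => exp (c * alpha * t)) K) /\
    (gamma = 1 -> 2 * c * alpha > 1 ->
       unif_cv_on (fun n t => lprod alpha r (kidx gamma n t) / lprod alpha r n)
                  (fun t => Rpower (1 + t) (c * alpha)) K).
Proof.
  intros K HK0 Hcomp. destruct (compact_P1 K Hcomp) as [m0 [M HM]].
  assert (Hp : forall j, 0 < 1 - alpha * r j).
  { intros j. destruct (Hr j). assert (alpha * r j <= r j) by nra. lra. }
  assert (Heq : forall n t, K t -> lprod alpha r (kidx gamma n t) / lprod alpha r n
                              = exp (ssum (aseq alpha r) n (kidx gamma n t - n))).
  { intros n t Ht.
    assert (0 <= Rpower (INR n) gamma * t) by (pose proof (Rpower_gt0 (INR n) gamma); pose proof (HK0 t Ht); nra).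
    destruct (kidx_facts gamma n t H) as [Hk _].
    replace (kidx gamma n t) with (n + (kidx gamma n t - n))%nat at 1 by lia.
    rewrite lprod_shift by auto. pose proof (lprod_pos alpha r n Hp). field. lra. }
  assert (Hkn : forall n t, K t -> (n <= kidx gamma n t)%nat).
  { intros n t Ht.
    assert (0 <= Rpower (INR n) gamma * t) by (pose proof (Rpower_gt0 (INR n) gamma); pose proof (HK0 t Ht); nra).
    now destruct (kidx_facts gamma n t H). }
  assert (HE := estimate alpha gamma c r Halpha ltac:(lra) Hc Hr Hlim).
  assert (HKb : forall t, K t -> 0 <= t <= M) by (intros t Ht; split; [apply HK0; auto | apply HM; auto]).
  split.
  - intros Hlt.
    apply unif_ext with (G := fun n t => exp (ssum (aseq alpha r) n (kidx gamma n t - n)))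
                        (g := fun t => exp (alpha * c * t)); auto.
    { intros t _. f_equal; ring. }
    apply generic with (w := fun j => Rpower (INR j) (- gamma)) (H := Rabs M); auto.
    + intros t Ht. destruct (HKb t Ht). rewrite Rabs_pos_eq by lra. pose proof (Rle_abs M). lra.
    + apply W_sub with (T := M); auto. lra.
  - intros Hg1 _.
    apply unif_ext with (G := fun n t => exp (ssum (aseq alpha r) n (kidx gamma n t - n)))
                        (g := fun t => exp (alpha * c * ln (1 + t))); auto.
    { intros t _. unfold Rpower. f_equal; ring. }
    apply generic with (w := fun j => Rpower (INR j) (- gamma)) (H := Rabs M); auto.
    + intros t Ht. destruct (HKb t Ht).
      assert (0 <= ln (1 + t)) by (apply ln_ge0; lra).
      assert (ln (1 + t) <= t) by (pose proof (ln_le_xm1 (1 + t) ltac:(lra)); lra).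
      rewrite Rabs_pos_eq by lra. pose proof (Rle_abs M). lra.
    + apply W_one; auto.
Qed.
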